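(* Assume $\sigma_1(x)=\tfrac12\sigma_1''(0)\,x(x-a_1)$ and $\sigma_2(x)=\tfrac12\sigma_2''(0)\,x(x-a_2)$ with $\sigma_1''(0)\ne0$, $\sigma_2''(0)\ne0$ and real $0<a_1<a_2$. Let $\Lambda_q=q^{-2}\Big[1+\frac{(1-q^{-1})\tau'(0)}{\frac12\sigma_1''(0)}\Big]$ and $y_0=q^{-1}\Big[1-\frac{(1-q^{-1})}{a_1}\frac{\tau(0)}{\frac12\sigma_1''(0)}\Big]$, and assume $0<qy_0<1$ and $0<q^2\Lambda_q<1$. Put $b=a_1$ and $$\rho(x)=|x|^{\alpha}\frac{(qx/b;q)_\infty}{(x/a_2;q)_\infty},\qquad q^{\alpha}=\frac{q^{-2}\sigma_2''(0)a_2}{\sigma_1''(0)b}.$$ Then there exist polynomials $P_n$, $n\in\mathbb{N}_0$, with $P_n$ of degree $n$ a solution of the q-EHT with $\lambda=\lambda_n$, and nonzero constants $d_n^2$, such that for all $m,n\in\mathbb{N}_0$ $$\int_0^{b}P_n(x)P_m(x)\rho(x)\,d_qx=d_n^2\delta_{mn},$$ i.e. orthogonality with respect to $\rho$ supported on $\{q^kb\}_{k\in\mathbb{N}_0}$.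
   Context: Throughout $0<q<1$. For a function $y$ and $\zeta\in\{q,q^{-1}\}$, $D_\zeta y(x)=\frac{y(x)-y(\zeta x)}{(1-\zeta)x}$ for $x\ne0$ and $D_\zeta y(0)=y'(0)$; $[n]_q=\frac{1-q^n}{1-q}$. Let $\sigma_1$ be a real polynomial of degree at most two, $\tau(x)=\tau'(0)x+\tau(0)$ a real polynomial with $\tau'(0)\ne0$, and $\sigma_2(x):=q[\sigma_1(x)+(1-q^{-1})x\tau(x)]$. The q-EHT with parameter $n$ is $\sigma_1(x)D_{q^{-1}}D_qy(x)+\tau(x)D_qy(x)+\lambda_ny(x)=0$, $\lambda_n=-[n]_q\big(\tau'(0)+\tfrac12[n-1]_{q^{-1}}\sigma_1''(0)\big)$. $(\beta;q)_\infty=\prod_{k\ge0}(1-\beta q^k)$. For $q^\alpha=c$ ($c\ne0$), $\alpha$ is any complex number with $e^{\alpha\ln q}=c$ and $|x|^\alpha:=e^{\alpha\ln|x|}$. For $b>0$, $\int_0^b f(x)\,d_qx=(1-q)b\sum_{j\ge0}q^jf(q^jb)$. *)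

(* Defs.v *)
From Stdlib Require Import Reals.
From Coquelicot Require Import Coquelicot.
Open Scope R_scope.

Definition Dz (zeta : R) (y : R -> R) (x : R) : R :=
  if Req_EM_T x 0 then Derive y 0 else (y x - y (zeta * x)) / ((1 - zeta) * x).

Definition qnum (q : R) (n : nat) : R := (1 - q ^ n) / (1 - q).

(* lambda_n = -[n]_q (tau'(0) + 1/2 [n-1]_{q^{-1}} sigma1''(0)).
   For n = 0 the factor [0]_q = 0 makes lambda_0 = 0 (truncated n-1 is harmless). *)
Definition lambda_n (q t1 s1 : R) (n : nat) : R :=
  - qnum q n * (t1 + / 2 * qnum (/ q) (n - 1) * s1).

Definition qEHT (q : R) (sigma1 tau : R -> R) (lam : R) (y : R -> R) (x : R) : Prop :=
  sigma1 x * Dz (/ q) (Dz q y) x + tau x * Dz q y x + lam * y x = 0.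

Fixpoint qpoch_n (beta q : R) (n : nat) : R :=
  match n with
  | O => 1
  | S k => qpoch_n beta q k * (1 - beta * q ^ k)
  end.
Definition qpoch_inf (beta q : R) : R := real (Lim_seq (qpoch_n beta q)).

Definition cexp (z : C) : C :=
  (exp (fst z) * cos (snd z), exp (fst z) * sin (snd z)).

Definition cabspow (x : R) (alpha : C) : C := cexp (Cmult alpha (RtoC (ln (Rabs x)))).

Definition rho (q b a2 : R) (alpha : C) (x : R) : C :=
  Cmult (cabspow x alpha) (RtoC (qpoch_inf (q * x / b) q / qpoch_inf (x / a2) q)).

(* "int_0^b f(x) d_qx = I" : the defining series
   (1-q) b sum_{j>=0} q^j f(q^j b) converges (in C) to I. *)
Definition is_qint (q b : R) (f : R -> C) (I : C) : Prop :=
  is_series (fun j : nat => Cmult (RtoC ((1 - q) * b * q ^ j)) (f (q ^ j * b))) I.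

Definition peval (c : nat -> R) (n : nat) (x : R) : R :=
  sum_f_R0 (fun k => c k * x ^ k) n.

(* Main.v *)
Require Import Defs.
From Stdlib Require Import Reals Lra Lia Arith FunctionalExtensionality Classical.
From Coquelicot Require Import Coquelicot.
Open Scope R_scope.

Lemma coef_rel (q s1 s2 t1 t0 a1 a2 : R) (hq : 0 < q < 1)
  (hsigma2 : forall x, q * (s1 / 2 * x * (x - a1) + (1 - / q) * x * (t1 * x + t0)) = s2 / 2 * x * (x - a2)) :
  s2 = q*s1 + 2*(q-1)*t1 /\ s2*a2 = q*s1*a1 - 2*(q-1)*t0.
Proof.
  pose proof (hsigma2 1) as h1. pose proof (hsigma2 2) as h2.
  assert (hqq : q * / q = 1) by (field; lra).
  assert (E1 : q * (1 - /q) = q - 1) by (field; lra).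
  split.
  - replace (q - 1) with (q * (1 - /q)) by exact E1. nra.
  - replace (q - 1) with (q * (1 - /q)) by exact E1. nra.
Qed.

Definition dc (z : R) (c : nat -> R) (k : nat) : R := qnum z (S k) * c (S k).

Lemma peval_diff (z : R) (c : nat -> R) (N : nat) (x : R) : z <> 1 ->
  peval c (S N) x - peval c (S N) (z*x) = (1-z)*x*peval (dc z c) N x.
Proof.
  intros hz. assert (1 - z <> 0) by lra.
  induction N.
  - unfold peval, dc, qnum; simpl. field. auto.
  - change (peval c (S (S N)) x) with (peval c (S N) x + c (S (S N)) * x^(S (S N))).
    change (peval c (S (S N)) (z*x)) with (peval c (S N) (z*x) + c (S (S N)) * (z*x)^(S (S N))).
    change (peval (dc z c) (S N) x) with (peval (dc z c) N x + dc z c (S N) * x^(S N)).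
    rewrite Rpow_mult_distr.
    replace (peval c (S N) x + c (S (S N)) * x ^ S (S N) -
       (peval c (S N) (z * x) + c (S (S N)) * (z ^ S (S N) * x ^ S (S N))))
     with ((peval c (S N) x - peval c (S N) (z*x)) + c (S (S N)) * (1 - z ^ S (S N)) * x ^ S (S N)) by ring.
    rewrite IHN. unfold dc, qnum. simpl. field. auto.
Qed.

Lemma peval_0 (c : nat -> R) (n : nat) : peval c n 0 = c 0%nat.
Proof.
  induction n. unfold peval; simpl; ring.
  change (peval c (S n) 0) with (peval c n 0 + c (S n) * 0^(S n)).
  rewrite IHn. simpl. ring.
Qed.

Lemma peval_derive0 (c : nat -> R) (n : nat) : is_derive (peval c (S n)) 0 (c 1%nat).
Proof.
  induction n.
  - unfold peval; simpl. auto_derive; auto. ring.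
  - change (peval c (S (S n))) with (fun x => peval c (S n) x + c (S (S n)) * x^(S (S n))).
    assert (H : is_derive (fun x => c (S (S n)) * x^(S (S n))) 0 0)
      by (auto_derive; [auto | simpl; ring]).
    replace (c 1%nat) with (c 1%nat + 0) by ring.
    apply (is_derive_plus (peval c (S n)) (fun x => c (S (S n)) * x^(S (S n)))); auto.
Qed.

Lemma peval_cont (c : nat -> R) (n : nat) (x : R) : continuous (peval c n) x.
Proof.
  apply (ex_derive_continuous (peval c n)).
  induction n.
  - unfold peval; simpl. auto_derive; auto.
  - change (peval c (S n)) with (fun x => peval c n x + c (S n) * x^(S n)).
    apply (ex_derive_plus (peval c n) (fun x => c (S n) * x^(S n))). exact IHn. auto_derive; auto.
Qed.
Definition PhiE (q s1x tx Y0 Y1 Ym x : R) : R :=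
  s1x * (((Y0 - Y1)/((1-q)*x) - (Ym - Y0)/((1-q)*(/q*x))) / ((1 - /q)*x))
  + tx * ((Y0 - Y1)/((1-q)*x)).

Definition mu (q s1 t0 a1 : R) (k : nat) : R :=
  qnum q k * (t0 - s1*a1/2 * qnum (/q) (k-1)).

Lemma qEHT_nz q sigma1 tau lam y x : x <> 0 -> q <> 0 ->
  (qEHT q sigma1 tau lam y x <->
   PhiE q (sigma1 x) (tau x) (y x) (y (q*x)) (y (/q*x)) x + lam * y x = 0).
Proof.
  intros hx hq. unfold qEHT, Dz, PhiE.
  destruct (Req_EM_T x 0) as [e|_]; [contradiction|].
  destruct (Req_EM_T (/q*x) 0) as [e|_].
  { apply Rmult_integral in e. destruct e as [e|e]; [|contradiction].
    exfalso; apply (Rinv_neq_0_compat q hq); exact e. }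
  replace (q * (/q * x)) with x by (field; auto).
  tauto.
Qed.

Lemma PhiE_lin q s x t A B C k u v w :
  PhiE q s t (A + k*u) (B + k*v) (C + k*w) x = PhiE q s t A B C x + k * PhiE q s t u v w x.
Proof. unfold PhiE. unfold Rdiv. ring. Qed.

Lemma PhiE_scal q s x t k u v w :
  PhiE q s t (k*u) (k*v) (k*w) x = k * PhiE q s t u v w x.
Proof. unfold PhiE. unfold Rdiv. ring. Qed.

Lemma PhiE_mon q s1 t1 t0 a1 x k : 0 < q < 1 -> x <> 0 ->
  PhiE q (s1/2*x*(x-a1)) (t1*x+t0) (x^k) ((q*x)^k) ((/q*x)^k) x
  = - lambda_n q t1 s1 k * x^k + mu q s1 t0 a1 k * x^(k-1).
Proof.
  intros hq hx.
  assert (q <> 0) by lra. assert (1 - q <> 0) by lra.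
  assert (1 - /q <> 0).
  { intro e. assert (e2 : /q = 1) by lra. assert (q = 1). { rewrite <- (Rinv_inv q). rewrite e2. field. } lra. }
  destruct k as [|j].
  - unfold PhiE, lambda_n, mu, qnum. simpl. field. repeat split; try assumption; try lra.
  - rewrite !Rpow_mult_distr. rewrite pow_inv.
    unfold lambda_n, mu, qnum.
    replace (S j - 1)%nat with j by lia.
    rewrite pow_inv.
    assert (hQ : q^j <> 0) by (apply pow_nonzero; auto).
    assert (hX : x^j <> 0) by (apply pow_nonzero; auto).
    simpl. unfold PhiE. field. repeat split; try assumption; try lra.
Qed.

Lemma mu0 q s1 t0 a1 : mu q s1 t0 a1 0 = 0.
Proof. unfold mu, qnum. simpl. unfold Rdiv. ring. Qed.

Lemma PhiE_peval q s1 t1 t0 a1 x c lamn N : 0 < q < 1 -> x <> 0 ->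
  (forall k, (lamn - lambda_n q t1 s1 k) * c k + mu q s1 t0 a1 (S k) * c (S k) = 0) ->
  PhiE q (s1/2*x*(x-a1)) (t1*x+t0) (peval c N x) (peval c N (q*x)) (peval c N (/q*x)) x
   + lamn * peval c N x = - mu q s1 t0 a1 (S N) * c (S N) * x^N.
Proof.
  intros hq hx HR.
  induction N.
  - change (peval c 0 ?z) with (c 0%nat * z^0). rewrite PhiE_scal, PhiE_mon by auto.
    rewrite mu0. pose proof (HR 0%nat) as E. simpl pow.
    transitivity (c 0%nat * (lamn - lambda_n q t1 s1 0) ); [ring|].
    lra.
  - change (peval c (S N) ?z) with (peval c N z + c (S N) * z^(S N)).
    rewrite PhiE_lin, PhiE_mon by auto.
    replace (S N - 1)%nat with N by lia.
    pose proof (HR (S N)) as E.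
    transitivity ((PhiE q (s1 / 2 * x * (x - a1)) (t1 * x + t0) (peval c N x) (peval c N (q * x))
      (peval c N (/ q * x)) x + lamn * peval c N x) + c (S N) * (mu q s1 t0 a1 (S N) * x ^ N)
      + x^(S N) * ((lamn - lambda_n q t1 s1 (S N)) * c (S N)) ); [ring|].
    rewrite IHN.
    replace ((lamn - lambda_n q t1 s1 (S N)) * c (S N)) with (- (mu q s1 t0 a1 (S (S N)) * c (S (S N)))) by lra.
    ring.
Qed.

Lemma lam_formula q s1 s2 t1 k : 0 < q < 1 -> s1 <> 0 ->
  s2 = q*s1 + 2*(q-1)*t1 ->
  lambda_n q t1 s1 k * (2*(1-q)^2*q^k) = (1 - q^k) * s1 * q * (s2/(q*s1) * q^k - q).
Proof.
  intros hq hs1 hs2.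
  assert (q <> 0) by lra. assert (1 - q <> 0) by lra.
  assert (1 - /q <> 0).
  { intro e. assert (e2 : /q = 1) by lra. assert (q = 1). { rewrite <- (Rinv_inv q). rewrite e2. field. } lra. }
  destruct k as [|j].
  - unfold lambda_n, qnum. simpl. field. repeat split; try assumption; try lra.
  - unfold lambda_n, qnum. replace (S j - 1)%nat with j by lia.
    rewrite pow_inv. assert (q^j <> 0) by (apply pow_nonzero; auto).
    subst s2. simpl. field. repeat split; try assumption; try lra.
Qed.

Lemma pow_le1 q n : 0 <= q <= 1 -> q^n <= 1.
Proof. intros h. induction n; simpl. lra. assert (0 <= q^n) by (apply pow_le; lra). nra. Qed.

Lemma pow_lt_lt q k n : 0 < q < 1 -> (k < n)%nat -> q^n < q^k.
Proof.
  intros hq hkn.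
  replace n with (k + (n - k))%nat by lia. rewrite pow_add.
  assert (0 < q^k) by (apply pow_lt; lra).
  assert (q^(n-k) < 1). { destruct (n-k)%nat eqn:E. lia. simpl.
    assert (q^n0 <= 1) by (apply pow_le1; lra). assert (0 < q^n0) by (apply pow_lt; lra). nra. }
  nra.
Qed.

Lemma lam_distinct q s1 s2 t1 k n : 0 < q < 1 -> s1 <> 0 ->
  s2 = q*s1 + 2*(q-1)*t1 -> 0 < s2/(q*s1) < 1 -> (k < n)%nat ->
  lambda_n q t1 s1 n <> lambda_n q t1 s1 k.
Proof.
  intros hq hs1 hs2 hr hkn E.
  pose proof (lam_formula q s1 s2 t1 n hq hs1 hs2) as Fn.
  pose proof (lam_formula q s1 s2 t1 k hq hs1 hs2) as Fk.
  set (r := s2/(q*s1)) in *.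
  set (Qn := q^n) in *. set (Qk := q^k) in *.
  assert (hQ : Qn < Qk) by (apply pow_lt_lt; auto).
  assert (hQn : 0 < Qn) by (apply pow_lt; lra).
  assert (hQk1 : Qk <= 1) by (apply pow_le1; lra).
  assert (hQnq : Qn <= q).
  { unfold Qn. destruct n. lia. simpl. assert (q^n <= 1) by (apply pow_le1; lra). nra. }
  assert (key : s1 * q * (Qk - Qn) * (r*Qn*Qk - q) = 0).
  { transitivity (Qk * (lambda_n q t1 s1 n * (2 * (1 - q) ^ 2 * Qn)) - Qn * (lambda_n q t1 s1 k * (2 * (1 - q) ^ 2 * Qk))).
    - rewrite Fn, Fk. ring.
    - rewrite E. ring. }
  assert (r*Qn*Qk < q).
  { assert (Qn * Qk <= q) by nra. assert (0 < Qn*Qk) by nra. nra. }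
  apply Rmult_integral in key. destruct key as [key|key]; [|lra].
  apply Rmult_integral in key. destruct key as [key|key]; [|lra].
  apply Rmult_integral in key. destruct key as [key|key]; lra.
Qed.

Fixpoint cc (lamf muf : nat -> R) (n i : nat) : R :=
  match i with
  | O => 1
  | S i' => - muf (S (n - S i')) * cc lamf muf n i' / (lamf n - lamf (n - S i')%nat)
  end.

Definition coef (lamf muf : nat -> R) (n k : nat) : R :=
  if (k <=? n)%nat then cc lamf muf n (n - k) else 0.

Lemma coef_nn lamf muf n : coef lamf muf n n = 1.
Proof. unfold coef. rewrite Nat.leb_refl. rewrite Nat.sub_diag. reflexivity. Qed.

Lemma coef_big lamf muf n k : (n < k)%nat -> coef lamf muf n k = 0.
Proof. intros h. unfold coef. destruct (Nat.leb_spec k n). lia. reflexivity. Qed.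

Lemma coef_rec lamf muf n : (forall k, (k < n)%nat -> lamf n <> lamf k) ->
  forall k, (lamf n - lamf k) * coef lamf muf n k + muf (S k) * coef lamf muf n (S k) = 0.
Proof.
  intros hd k.
  destruct (lt_eq_lt_dec k n) as [[hlt|heq]|hgt].
  - assert (hne := hd k hlt).
    assert (lamf n - lamf k <> 0) by (intro; apply hne; lra).
    unfold coef.
    destruct (Nat.leb_spec k n); [|lia]. destruct (Nat.leb_spec (S k) n); [|lia].
    replace (n - k)%nat with (S (n - S k)) by lia. simpl cc.
    replace (n - S (n - S k))%nat with k by lia.
    replace (S (n - S (n - S k))) with (S k) by lia.
    field. auto.
  - subst. rewrite coef_nn, coef_big by lia. ring.
  - rewrite !coef_big by lia. ring.
Qed.

Lemma peval_ext_S c n : c (S n) = 0 -> peval c n = peval c (S n).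
Proof.
  intros h. apply functional_extensionality. intros x.
  change (peval c (S n) x) with (peval c n x + c (S n) * x^(S n)). rewrite h. ring.
Qed.

Lemma qEHT_P (q : R) (hq : 0 < q < 1)
  (sigma1 tau : R -> R) (s1 s2 t1 t0 a1 : R)
  (ht : forall x, tau x = t1 * x + t0)
  (hs1 : s1 <> 0)
  (hsigma1 : forall x, sigma1 x = s1 / 2 * x * (x - a1))
  (hs2 : s2 = q*s1 + 2*(q-1)*t1) (hr : 0 < s2/(q*s1) < 1) (n : nat) (x : R) :
  qEHT q sigma1 tau (lambda_n q t1 s1 n)
    (peval (coef (lambda_n q t1 s1) (mu q s1 t0 a1) n) n) x.
Proof.
  set (c := coef (lambda_n q t1 s1) (mu q s1 t0 a1) n).
  assert (HR : forall k, (lambda_n q t1 s1 n - lambda_n q t1 s1 k) * c k + mu q s1 t0 a1 (S k) * c (S k) = 0).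
  { apply coef_rec. intros k hk. apply (lam_distinct q s1 s2 t1 k n); auto. }
  assert (hc : c (S n) = 0) by (apply coef_big; lia).
  destruct (Req_EM_T x 0) as [hx|hx].
  - subst x. unfold qEHT. rewrite hsigma1, ht.
    rewrite (peval_ext_S c n hc).
    assert (D0 : Dz q (peval c (S n)) 0 = c 1%nat).
    { unfold Dz. destruct (Req_EM_T 0 0) as [_|ne]; [|lra].
      apply (is_derive_unique _ _ _ (peval_derive0 c n)). }
    rewrite D0.
    change (peval c (S n) 0) with (peval c n 0 + c (S n) * 0^(S n)).
    rewrite peval_0.
    pose proof (HR 0%nat) as E.
    assert (L0 : lambda_n q t1 s1 0 = 0) by (unfold lambda_n, qnum; simpl; unfold Rdiv; ring).
    assert (M1 : mu q s1 t0 a1 1 = t0).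
    { unfold mu, qnum. simpl. field. lra. }
    rewrite L0, M1 in E.
    rewrite hc. ring_simplify. lra.
  - apply qEHT_nz; auto. lra.
    rewrite hsigma1, ht. rewrite PhiE_peval; auto. rewrite hc. ring.
Qed.



Lemma qpoch_shift b q N : qpoch_n b q (S N) = (1-b) * qpoch_n (b*q) q N.
Proof.
  induction N.
  - simpl. ring.
  - change (qpoch_n b q (S (S N))) with (qpoch_n b q (S N) * (1 - b * q^(S N))).
    rewrite IHN. simpl. ring.
Qed.

Lemma exp_le x y : x <= y -> exp x <= exp y.
Proof. intros h. destruct (Rle_lt_or_eq_dec x y h). left; apply exp_increasing; auto. subst; lra. Qed.

Lemma exp_bound x b : 0 <= x <= b -> b < 1 -> exp (-(x/(1-b))) <= 1 - x.
Proof.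
  intros hx hb.
  apply Rle_trans with (exp (-(x/(1-x)))).
  { apply exp_le. apply Ropp_le_contravar. unfold Rdiv.
    apply Rmult_le_compat_l; [lra|]. apply Rinv_le_contravar; lra. }
  rewrite exp_Ropp.
  assert (h := exp_ineq1_le (x/(1-x))).
  assert (0 <= x/(1-x)) by (apply Rdiv_le_0_compat; lra).
  apply Rle_trans with (/ (1 + x/(1-x))).
  - apply Rinv_le_contravar; [lra|exact h].
  - right. field. lra.
Qed.

Lemma qpoch_bounds b q N : 0 <= b < 1 -> 0 < q < 1 ->
  exp (-(b*(1-q^N)/((1-b)*(1-q)))) <= qpoch_n b q N <= 1.
Proof.
  intros hb hq. induction N.
  - simpl. replace (-(b*(1-1)/((1-b)*(1-q)))) with 0 by (field; lra). rewrite exp_0. lra.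
  - simpl qpoch_n.
    assert (h0 : 0 <= q^N <= 1) by (split; [apply pow_le; lra | apply pow_le1; lra]).
    assert (hf : exp (-(b*q^N/(1-b))) <= 1 - b*q^N) by (apply exp_bound; nra).
    assert (hf2 : 1 - b*q^N <= 1) by nra.
    split.
    + replace (-(b*(1-q^(S N))/((1-b)*(1-q)))) with (-(b*(1-q^N)/((1-b)*(1-q))) + -(b*q^N/(1-b)))
        by (simpl; field; lra).
      rewrite exp_plus. apply Rmult_le_compat; try (left; apply exp_pos); tauto.
    + assert (0 <= qpoch_n b q N) by (apply Rle_trans with (2 := proj1 IHN); left; apply exp_pos).
      assert (0 <= 1 - b*q^N) by nra. nra.
Qed.

Lemma qpoch_lim b q : 0 <= b < 1 -> 0 < q < 1 ->
  is_lim_seq (qpoch_n b q) (qpoch_inf b q) /\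
  exp (-(b/((1-b)*(1-q)))) <= qpoch_inf b q <= 1.
Proof.
  intros hb hq.
  set (L := exp (-(b/((1-b)*(1-q))))).
  assert (hlow : forall N, L <= qpoch_n b q N).
  { intros N. apply Rle_trans with (2 := proj1 (qpoch_bounds b q N hb hq)).
    apply exp_le. apply Ropp_le_contravar. unfold Rdiv.
    assert (0 < q^N) by (apply pow_lt; lra).
    assert (0 < /((1-b)*(1-q))) by (apply Rinv_0_lt_compat; nra).
    apply Rmult_le_compat_r; [lra|]. nra. }
  assert (hup : forall N, qpoch_n b q N <= 1) by (intros N; apply (qpoch_bounds b q N hb hq)).
  assert (hdec : forall N, qpoch_n b q (S N) <= qpoch_n b q N).
  { intros N. simpl. assert (0 < L) by apply exp_pos.
    assert (0 <= q^N <= 1) by (split; [apply pow_le; lra | apply pow_le1; lra]).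
    specialize (hlow N). assert (0 <= b*q^N) by nra. assert (0 <= qpoch_n b q N) by lra. nra. }
  assert (hex : ex_lim_seq (qpoch_n b q)) by (apply ex_lim_seq_decr; auto).
  pose proof (Lim_seq_correct _ hex) as hc.
  assert (h1 : Rbar_le L (Lim_seq (qpoch_n b q))).
  { apply (is_lim_seq_le (fun _ => L) (qpoch_n b q)); auto. apply is_lim_seq_const. }
  assert (h2 : Rbar_le (Lim_seq (qpoch_n b q)) 1).
  { apply (is_lim_seq_le (qpoch_n b q) (fun _ => 1)); auto. apply is_lim_seq_const. }
  unfold qpoch_inf.
  destruct (Lim_seq (qpoch_n b q)) as [l| |]; simpl in *; try contradiction.
  auto.
Qed.

Lemma qpoch_inf_shift b q : 0 <= b < 1 -> 0 < q < 1 ->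
  qpoch_inf b q = (1-b) * qpoch_inf (b*q) q.
Proof.
  intros hb hq.
  assert (hb' : 0 <= b*q < 1) by nra.
  destruct (qpoch_lim b q hb hq) as [h1 _].
  destruct (qpoch_lim (b*q) q hb' hq) as [h2 _].
  apply is_lim_seq_incr_1 in h1.
  assert (h3 : is_lim_seq (fun N => (1-b) * qpoch_n (b*q) q N) ((1-b) * qpoch_inf (b*q) q)).
  { apply (is_lim_seq_scal_l _ (1-b) (qpoch_inf (b*q) q)). exact h2. }
  assert (E : Finite (qpoch_inf b q) = Finite ((1-b) * qpoch_inf (b*q) q)).
  { apply (is_lim_seq_unique _ _) in h1. apply (is_lim_seq_unique _ _) in h3.
    rewrite <- h1, <- h3. apply Lim_seq_ext. intros N. apply qpoch_shift. }
  injection E. auto.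
Qed.

Lemma cexp_add z w : cexp (Cplus z w) = Cmult (cexp z) (cexp w).
Proof.
  destruct z as [z1 z2], w as [w1 w2]. unfold cexp, Cplus, Cmult. simpl.
  rewrite exp_plus, cos_plus, sin_plus. f_equal; ring.
Qed.

Lemma Cmult_RtoC_plus a u v : Cmult a (RtoC (u+v)) = Cplus (Cmult a (RtoC u)) (Cmult a (RtoC v)).
Proof. destruct a as [a1 a2]. unfold Cmult, Cplus, RtoC. simpl. f_equal; ring. Qed.

Lemma cabspow_pt q a1 alpha K j : 0 < q -> 0 < a1 ->
  cexp (Cmult alpha (RtoC (ln q))) = RtoC K ->
  cabspow (q^j*a1) alpha = Cmult (RtoC (K^j)) (cexp (Cmult alpha (RtoC (ln a1)))).
Proof.
  intros hq ha hK. unfold cabspow.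
  assert (0 < q^j) by (apply pow_lt; lra).
  rewrite Rabs_pos_eq by nra.
  rewrite ln_mult by auto. rewrite ln_pow by auto.
  induction j.
  - simpl. replace (0 * ln q + ln a1) with (ln a1) by ring.
    destruct (cexp (Cmult alpha (RtoC (ln a1)))) as [u v]. unfold Cmult, RtoC. simpl. f_equal; ring.
  - replace (INR (S j) * ln q + ln a1) with (ln q + (INR j * ln q + ln a1)) by (rewrite S_INR; ring).
    rewrite Cmult_RtoC_plus, cexp_add, hK.
    assert (0 < q^j) by (apply pow_lt; lra).
    rewrite (IHj H0).
    destruct (cexp (Cmult alpha (RtoC (ln a1)))) as [u v]. unfold Cmult, RtoC. simpl. f_equal; ring.
Qed.

Lemma cexp_nz z : cexp z <> RtoC 0.
Proof.
  destruct z as [x y]. unfold cexp, RtoC. simpl. intro E. injection E. intros e2 e1.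
  assert (0 < exp x) by apply exp_pos.
  assert (cos y = 0) by (apply Rmult_integral in e1; destruct e1; lra).
  assert (sin y = 0) by (apply Rmult_integral in e2; destruct e2; lra).
  pose proof (sin2_cos2 y). unfold Rsqr in *. rewrite H0, H1 in H2. lra.
Qed.

Lemma sum_n_RtoC (r : nat -> R) N : sum_n (fun j => RtoC (r j)) N = RtoC (sum_n r N).
Proof.
  induction N.
  - rewrite !sum_O. reflexivity.
  - rewrite !sum_Sn. rewrite IHN. unfold plus. simpl. unfold RtoC, Cplus. simpl. f_equal; ring.
Qed.

Lemma is_series_RtoC (r : nat -> R) S : is_series r S -> is_series (fun j => RtoC (r j)) (RtoC S).
Proof.
  intros h. unfold is_series in *.
  apply filterlim_locally. intros eps.
  pose proof (proj1 (filterlim_locally _ _) h eps) as h2.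
  eapply filter_imp; [|exact h2].
  intros N HN. rewrite sum_n_RtoC. split; simpl.
  - exact HN.
  - apply ball_center.
Qed.

Lemma is_series_CR (B : C) (r : nat -> R) S : is_series r S ->
  is_series (fun j => Cmult B (RtoC (r j))) (Cmult B (RtoC S)).
Proof.
  intros h. apply is_series_RtoC in h.
  apply (is_series_scal B) in h. exact h.
Qed.

Record Setting (q : R) (sigma1 tau : R -> R) (s1 s2 t1 t0 a1 a2 : R) : Prop := {
  S_q : 0 < q < 1;
  S_tau : forall x, tau x = t1*x+t0;
  S_s1 : s1 <> 0;
  S_s2 : s2 <> 0;
  S_a : 0 < a1 < a2;
  S_sig1 : forall x, sigma1 x = s1/2*x*(x-a1);
  S_sig2 : forall x, q * (sigma1 x + (1 - /q) * x * tau x) = s2/2*x*(x-a2);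
  S_qK : 0 < s2*a2/(q*s1*a1) < 1 }.

Definition KK (q s1 s2 a1 a2 : R) : R := /q^2*s2*a2/(s1*a1).

Definition vw (q s1 s2 a1 a2 : R) (j : nat) : R :=
  (q * KK q s1 s2 a1 a2)^j * (qpoch_inf (q^(S j)) q / qpoch_inf (q^j*(a1/a2)) q).

Definition LD (q a1 a2 : R) : R := exp (-((a1/a2)/((1-a1/a2)*(1-q)))).

Lemma qK_eq q s1 s2 a1 a2 : q <> 0 -> s1 <> 0 -> a1 <> 0 ->
  q * KK q s1 s2 a1 a2 = s2*a2/(q*s1*a1).
Proof. intros. unfold KK. field. auto. Qed.

Lemma v_bounds q sigma1 tau s1 s2 t1 t0 a1 a2 :
  Setting q sigma1 tau s1 s2 t1 t0 a1 a2 -> forall j,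
  0 < vw q s1 s2 a1 a2 j <= (s2*a2/(q*s1*a1))^j * / LD q a1 a2.
Proof.
  intros St j. destruct St as [hq ht hs1 hs2 ha hsig1 hsig2 hqK].
  unfold vw. rewrite qK_eq by lra.
  set (r := s2*a2/(q*s1*a1)) in *.
  set (g := a1/a2).
  assert (hg : 0 < g < 1).
  { unfold g. split. apply Rdiv_lt_0_compat; lra. apply (Rmult_lt_reg_r a2); [lra|]. field_simplify; lra. }
  assert (hQ : 0 < q^j <= 1) by (split; [apply pow_lt; lra| apply pow_le1; lra]).
  assert (hb1 : 0 <= q^(S j) < 1).
  { simpl. split. nra. nra. }
  assert (hb2 : 0 <= q^j * g < 1) by nra.
  destruct (qpoch_lim _ _ hb1 hq) as [_ [N1 N2]].
  destruct (qpoch_lim _ _ hb2 hq) as [_ [D1 D2]].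
  set (Nn := qpoch_inf (q^(S j)) q) in *.
  set (Dd := qpoch_inf (q^j*g) q) in *.
  assert (hL : LD q a1 a2 <= exp (- (q ^ j * g / ((1 - q ^ j * g) * (1 - q))))).
  { unfold LD. fold g. apply exp_le. apply Ropp_le_contravar. unfold Rdiv.
    assert (0 < (1 - g) * (1 - q)) by nra.
    assert (q^j*g <= g) by nra. assert ((1 - g) * (1 - q) <= (1 - q^j*g) * (1 - q)) by (apply Rmult_le_compat_r; lra).
    apply Rmult_le_compat.
    - nra.
    - left; apply Rinv_0_lt_compat; lra.
    - nra.
    - apply Rinv_le_contravar; lra. }
  assert (hLp : 0 < LD q a1 a2) by apply exp_pos.
  assert (hNp : 0 < Nn) by (apply Rlt_le_trans with (2 := N1); apply exp_pos).
  assert (hDp : LD q a1 a2 <= Dd) by lra.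
  assert (hrj : 0 < r^j) by (apply pow_lt; lra).
  split.
  - apply Rmult_lt_0_compat; auto. apply Rdiv_lt_0_compat; lra.
  - apply Rmult_le_compat_l; [lra|].
    unfold Rdiv. apply Rle_trans with (1 * / Dd).
    + apply Rmult_le_compat_r; [left; apply Rinv_0_lt_compat; lra| lra].
    + rewrite Rmult_1_l. apply Rinv_le_contravar; lra.
Qed.

Definition betaf (sigma1 : R -> R) (q X : R) : R := sigma1 X/((1-/q)*X).
Definition alphaf (sigma1 tau : R -> R) (q X : R) : R := betaf sigma1 q X + tau X.

Lemma qinv_ne1 q : 0 < q < 1 -> 1 - /q <> 0.
Proof.
  intros hq e. assert (e2 : /q = 1) by lra.
  assert (q = 1). { rewrite <- (Rinv_inv q). rewrite e2. field. } lra.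
Qed.

Lemma alphaf_eq q sigma1 tau s1 s2 t1 t0 a1 a2 X :
  Setting q sigma1 tau s1 s2 t1 t0 a1 a2 -> X <> 0 ->
  alphaf sigma1 tau q X = s2/2*(X-a2)/(q*(1-/q)).
Proof.
  intros St hX. pose proof (S_q _ _ _ _ _ _ _ _ _ St) as hq.
  pose proof (S_sig2 _ _ _ _ _ _ _ _ _ St X) as h.
  pose proof (qinv_ne1 q hq).
  unfold alphaf, betaf.
  apply (Rmult_eq_reg_l (q*(1-/q)*X)).
  2: { apply Rmult_integral_contrapositive; split; auto. apply Rmult_integral_contrapositive; split; lra. }
  transitivity (q * (sigma1 X + (1 - / q) * X * tau X)).
  - field; repeat split; try assumption; try lra.
  - rewrite h. field; repeat split; try assumption; try lra.
Qed.

Lemma pos_inf b q : 0 <= b < 1 -> 0 < q < 1 -> 0 < qpoch_inf b q.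
Proof.
  intros hb hq. destruct (qpoch_lim b q hb hq) as [_ [h _]].
  apply Rlt_le_trans with (2 := h). apply exp_pos.
Qed.

Lemma DB q sigma1 tau s1 s2 t1 t0 a1 a2 j :
  Setting q sigma1 tau s1 s2 t1 t0 a1 a2 ->
  vw q s1 s2 a1 a2 (S j) * (q * betaf sigma1 q (q^(S j)*a1) / (q^(S j)*a1))
  = vw q s1 s2 a1 a2 j * (alphaf sigma1 tau q (q^j*a1) / (q^j*a1)).
Proof.
  intros St. pose proof St as [hq ht hs1 hs2 ha hsig1 hsig2 hqK].
  pose proof (qinv_ne1 q hq).
  set (g := a1/a2).
  assert (hg : 0 < g < 1).
  { unfold g. split. apply Rdiv_lt_0_compat; lra. apply (Rmult_lt_reg_r a2); [lra|]. field_simplify; lra. }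
  assert (hQ : 0 < q^j <= 1) by (split; [apply pow_lt; lra| apply pow_le1; lra]).
  assert (EN : qpoch_inf (q^(S j)) q = (1 - q^(S j)) * qpoch_inf (q^(S (S j))) q).
  { rewrite qpoch_inf_shift by (simpl; auto; split; nra). f_equal. f_equal. simpl. ring. }
  assert (ED : qpoch_inf (q^j*g) q = (1 - q^j*g) * qpoch_inf (q^(S j)*g) q).
  { rewrite qpoch_inf_shift by (auto; split; nra). f_equal. f_equal. simpl. ring. }
  assert (hQ1 : 0 < q^(S j) <= 1) by (split; [apply pow_lt; lra| apply pow_le1; lra]).
  assert (hD' : 0 < qpoch_inf (q^(S j)*g) q) by (apply pos_inf; auto; split; nra).
  assert (hx : q^j*a1 <> 0) by nra.
  rewrite alphaf_eq with (1 := St) by auto.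
  unfold vw. fold g. rewrite EN, ED.
  set (N' := qpoch_inf (q^(S (S j))) q). set (D' := qpoch_inf (q^(S j)*g) q).
  unfold betaf. rewrite hsig1. unfold KK, g.
  assert (1 - q^j*(a1/a2) <> 0) by (fold g; nra).
  assert (D' <> 0) by (unfold D'; lra). assert (a2 - q^j*a1 <> 0) by nra.
  simpl. field. repeat split; try lra; nra.
Qed.

Lemma ALG q s t v x Y0 Y1 Ym Z0 Z1 Zm : 0 < q < 1 -> x <> 0 ->
  v*(PhiE q s t Y0 Y1 Ym x * Z0 - Y0 * PhiE q s t Z0 Z1 Zm x)
  = v*(s/((1-/q)*x) + t)/((1-q)*x)*(Y0*Z1 - Y1*Z0) - v*q*(s/((1-/q)*x))/((1-q)*x)*(Ym*Z0 - Y0*Zm).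
Proof.
  intros hq hx. pose proof (qinv_ne1 q hq).
  unfold PhiE. field. repeat split; try assumption; try lra.
Qed.

Definition Gs q sigma1 tau s1 s2 a1 a2 (y z : R -> R) (j : nat) : R :=
  vw q s1 s2 a1 a2 j * alphaf sigma1 tau q (q^j*a1) / ((1-q)*(q^j*a1)) *
  (y (q^j*a1) * z (q^(S j)*a1) - y (q^(S j)*a1) * z (q^j*a1)).

Lemma TEL q sigma1 tau s1 s2 t1 t0 a1 a2 (y z : R -> R) ly lz :
  Setting q sigma1 tau s1 s2 t1 t0 a1 a2 ->
  (forall x, qEHT q sigma1 tau ly y x) -> (forall x, qEHT q sigma1 tau lz z x) ->
  forall N, sum_f_R0 (fun j => vw q s1 s2 a1 a2 j * (y (q^j*a1) * z (q^j*a1))) N * (lz - ly)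
    = Gs q sigma1 tau s1 s2 a1 a2 y z N.
Proof.
  intros St Hy Hz.
  pose proof St as [hq ht hs1 hs2 ha hsig1 hsig2 hqK].
  assert (term : forall j, vw q s1 s2 a1 a2 j * (y (q^j*a1) * z (q^j*a1)) * (lz - ly)
     = Gs q sigma1 tau s1 s2 a1 a2 y z j -
       match j with O => 0 | S i => Gs q sigma1 tau s1 s2 a1 a2 y z i end).
  { intros j.
    assert (hx : q^j*a1 <> 0) by (assert (0 < q^j) by (apply pow_lt; lra); nra).
    pose proof (proj1 (qEHT_nz q sigma1 tau ly y (q^j*a1) hx ltac:(lra)) (Hy _)) as Ey.
    pose proof (proj1 (qEHT_nz q sigma1 tau lz z (q^j*a1) hx ltac:(lra)) (Hz _)) as Ez.
    replace (q * (q^j*a1)) with (q^(S j)*a1) in Ey, Ez by (simpl; ring).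
    set (Y0 := y (q^j*a1)) in *. set (Z0 := z (q^j*a1)) in *.
    set (PY := PhiE q (sigma1 (q ^ j * a1)) (tau (q ^ j * a1)) Y0 (y (q ^ S j * a1)) (y (/ q * (q ^ j * a1))) (q ^ j * a1)) in *.
    set (PZ := PhiE q (sigma1 (q ^ j * a1)) (tau (q ^ j * a1)) Z0 (z (q ^ S j * a1)) (z (/ q * (q ^ j * a1))) (q ^ j * a1)) in *.
    transitivity (vw q s1 s2 a1 a2 j * (PY * Z0 - Y0 * PZ)).
    { replace PY with (- ly * Y0) by lra. replace PZ with (- lz * Z0) by lra. ring. }
    unfold PY, PZ. rewrite ALG by auto.
    unfold Gs. fold Y0 Z0. unfold alphaf, betaf.
    destruct j as [|i].
    - rewrite hsig1. simpl. field. split; [|lra]. simpl in hx. lra.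
    - replace (/ q * (q ^ S i * a1)) with (q^i*a1) by (simpl; field; lra).
      pose proof (DB q sigma1 tau s1 s2 t1 t0 a1 a2 i St) as Hdb.
      unfold alphaf, betaf in Hdb.
      assert (hxi : q^i*a1 <> 0) by (assert (0 < q^i) by (apply pow_lt; lra); nra).
      assert (hqS : q^(S i) <> 0) by (apply pow_nonzero; lra).
      assert (hqi : q^i <> 0) by (apply pow_nonzero; lra).
      assert (ha1 : a1 <> 0) by lra.
      set (V1 := vw q s1 s2 a1 a2 (S i)) in *. set (V0 := vw q s1 s2 a1 a2 i) in *.
      set (B1 := sigma1 (q ^ S i * a1) / ((1 - / q) * (q ^ S i * a1))) in *.
      set (A0 := sigma1 (q ^ i * a1) / ((1 - / q) * (q ^ i * a1)) + tau (q ^ i * a1)) in *.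
      assert (E : V1 * q * B1 / ((1 - q) * (q ^ S i * a1)) = V0 * A0 / ((1 - q) * (q^i*a1))).
      { transitivity (V1 * (q * B1 / (q ^ S i * a1)) / (1-q)).
        - field; repeat split; try assumption; try lra.
        - rewrite Hdb. field; repeat split; try assumption; try lra. }
      rewrite E. unfold Y0, Z0. ring. }
  induction N.
  - simpl sum_f_R0. rewrite term. ring.
  - simpl sum_f_R0. rewrite Rmult_plus_distr_r, IHN, term. ring.
Qed.

Lemma Gs_eq q sigma1 tau s1 s2 t1 t0 a1 a2 (y z Dy Dzz : R -> R) N :
  Setting q sigma1 tau s1 s2 t1 t0 a1 a2 ->
  (forall X, y X - y (q*X) = (1-q)*X*Dy X) ->
  (forall X, z X - z (q*X) = (1-q)*X*Dzz X) ->
  Gs q sigma1 tau s1 s2 a1 a2 y z N =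
  vw q s1 s2 a1 a2 N * (s2/2*(q^N*a1-a2)/(q*(1-/q)) *
     (z (q^N*a1) * Dy (q^N*a1) - y (q^N*a1) * Dzz (q^N*a1))).
Proof.
  intros St hy hz. pose proof St as [hq ht hs1 hs2 ha hsig1 hsig2 hqK].
  pose proof (qinv_ne1 q hq).
  assert (hx : q^N*a1 <> 0) by (assert (0 < q^N) by (apply pow_lt; lra); nra).
  unfold Gs. rewrite alphaf_eq with (1 := St) by auto.
  replace (q^(S N)*a1) with (q*(q^N*a1)) by (simpl; ring).
  set (X := q^N*a1) in *.
  replace (y (q*X)) with (y X - (1-q)*X*Dy X) by (rewrite <- hy; ring).
  replace (z (q*X)) with (z X - (1-q)*X*Dzz X) by (rewrite <- hz; ring).
  field. repeat split; try assumption; try lra.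
Qed.

Lemma v_lim q sigma1 tau s1 s2 t1 t0 a1 a2 :
  Setting q sigma1 tau s1 s2 t1 t0 a1 a2 -> is_lim_seq (vw q s1 s2 a1 a2) 0.
Proof.
  intros St. pose proof St as [hq ht hs1 hs2 ha hsig1 hsig2 hqK].
  set (r := s2*a2/(q*s1*a1)) in *.
  apply is_lim_seq_le_le with (u := fun _ => 0) (w := fun N => r^N * / LD q a1 a2).
  - intros N. pose proof (v_bounds _ _ _ _ _ _ _ _ _ St N) as hb. fold r in hb. lra.
  - apply is_lim_seq_const.
  - replace (Finite 0) with (Rbar_mult 0 (/ LD q a1 a2)) by (simpl; f_equal; ring).
    apply is_lim_seq_scal_r. apply is_lim_seq_geom. rewrite Rabs_pos_eq; lra.
Qed.

Lemma orth q sigma1 tau s1 s2 t1 t0 a1 a2 (y z Dy Dzz : R -> R) ly lz :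
  Setting q sigma1 tau s1 s2 t1 t0 a1 a2 ->
  (forall x, qEHT q sigma1 tau ly y x) -> (forall x, qEHT q sigma1 tau lz z x) ->
  (forall X, y X - y (q*X) = (1-q)*X*Dy X) ->
  (forall X, z X - z (q*X) = (1-q)*X*Dzz X) ->
  (forall X, ex_derive y X) -> (forall X, ex_derive z X) ->
  (forall X, ex_derive Dy X) -> (forall X, ex_derive Dzz X) ->
  ly <> lz ->
  is_series (fun j => vw q s1 s2 a1 a2 j * (y (q^j*a1) * z (q^j*a1))) 0.
Proof.
  intros St Hy Hz hy hz dy dz ddy ddz hl.
  pose proof St as [hq ht hs1 hs2 ha hsig1 hsig2 hqK].
  set (F := fun X => s2/2*(X-a2)/(q*(1-/q)) * (z X * Dy X - y X * Dzz X)).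
  assert (hF : is_lim_seq (fun N => F (q^N*a1)) (F 0)).
  { assert (hx : is_lim_seq (fun N => q^N*a1) 0).
    { replace (Finite 0) with (Rbar_mult 0 a1) by (simpl; f_equal; ring).
      apply is_lim_seq_scal_r. apply is_lim_seq_geom. rewrite Rabs_pos_eq; lra. }
    assert (hc : continuous F 0).
    { apply (ex_derive_continuous F). unfold F. auto_derive. repeat split; auto. }
    unfold is_lim_seq in *.
    apply (filterlim_comp _ _ _ (fun N => q^N*a1) F _ _ _ hx hc). }
  assert (hG : is_lim_seq (Gs q sigma1 tau s1 s2 a1 a2 y z) 0).
  { apply is_lim_seq_ext with (u := fun N => vw q s1 s2 a1 a2 N * F (q^N*a1)).
    - intros N. rewrite (Gs_eq _ _ _ _ _ _ _ _ _ y z Dy Dzz N St hy hz). reflexivity.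
    - replace (Finite 0) with (Finite (0 * F 0)) by (f_equal; ring).
      apply is_lim_seq_mult'. apply (v_lim _ _ _ _ _ _ _ _ _ St). exact hF. }
  unfold is_series.
  change (is_lim_seq (sum_n (fun j => vw q s1 s2 a1 a2 j * (y (q^j*a1) * z (q^j*a1)))) 0).
  apply is_lim_seq_ext with (u := fun N => Gs q sigma1 tau s1 s2 a1 a2 y z N * / (lz - ly)).
  - intros N. rewrite sum_n_Reals.
    rewrite <- (TEL _ _ _ _ _ _ _ _ _ y z ly lz St Hy Hz N). field. lra.
  - replace (Finite 0) with (Rbar_mult 0 (/ (lz - ly))) by (simpl; f_equal; ring).
    apply is_lim_seq_scal_r. exact hG.
Qed.

Lemma peval_low c n X : (forall k, (1 <= k <= n)%nat -> c k = 0) -> peval c n X = c 0%nat.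
Proof.
  induction n; intros h.
  - unfold peval. simpl. ring.
  - change (peval c (S n) X) with (peval c n X + c (S n) * X^(S n)).
    rewrite IHn by (intros; apply h; lia). rewrite (h (S n)) by lia. ring.
Qed.

Lemma qnum_nz q k : 0 < q < 1 -> qnum q (S k) <> 0.
Proof.
  intros hq. unfold qnum. assert (q^(S k) < 1).
  { simpl. assert (q^k <= 1) by (apply pow_le1; lra). assert (0 < q^k) by (apply pow_lt; lra). nra. }
  apply Rmult_integral_contrapositive. split. lra. apply Rinv_neq_0_compat. lra.
Qed.

Lemma poly_zero q a1 : 0 < q < 1 -> 0 < a1 -> forall n c,
  (forall j, peval c n (q^j*a1) = 0) -> forall k, (k <= n)%nat -> c k = 0.
Proof.
  intros hq ha. induction n; intros c h k hk.
  - specialize (h 0%nat). unfold peval in h. simpl in h. replace k with 0%nat by lia. lra.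
  - assert (hd : forall j, peval (dc q c) n (q^j*a1) = 0).
    { intros j. pose proof (peval_diff q c n (q^j*a1) ltac:(lra)) as E.
      replace (q*(q^j*a1)) with (q^(S j)*a1) in E by (simpl; ring).
      rewrite (h j), (h (S j)) in E.
      assert (0 < q^j) by (apply pow_lt; lra).
      assert (hne : (1-q)*(q^j*a1) <> 0) by (apply Rmult_integral_contrapositive; split; nra).
      apply (Rmult_eq_reg_l ((1-q)*(q^j*a1))); auto. rewrite <- E. ring. }
    assert (hS : forall k, (1 <= k <= S n)%nat -> c k = 0).
    { intros k' hk'. destruct k' as [|k']. lia.
      pose proof (IHn (dc q c) hd k' ltac:(lia)) as E. unfold dc in E.
      apply Rmult_integral in E. destruct E as [E|E]; auto.
      exfalso; apply (qnum_nz q k' hq E). }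
    destruct k as [|k].
    + specialize (h 0%nat). rewrite peval_low in h; auto.
    + apply hS. lia.
Qed.

Lemma norm_pos q sigma1 tau s1 s2 t1 t0 a1 a2 (c : nat -> R) n :
  Setting q sigma1 tau s1 s2 t1 t0 a1 a2 -> c n <> 0 ->
  exists S, 0 < S /\
  is_series (fun j => vw q s1 s2 a1 a2 j * (peval c n (q^j*a1) * peval c n (q^j*a1))) S.
Proof.
  intros St hc. pose proof St as [hq ht hs1 hs2 ha hsig1 hsig2 hqK].
  set (y := peval c n).
  set (a := fun j => vw q s1 s2 a1 a2 j * (y (q^j*a1) * y (q^j*a1))).
  set (r := s2*a2/(q*s1*a1)) in *.
  destruct (continuity_ab_maj (fun x => y x * y x) 0 a1 ltac:(lra)) as [Mx [hM _]].
  { intros x _. apply continuity_pt_filterlim.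
    apply (ex_derive_continuous (fun x => y x * y x)). unfold y.
    assert (forall x, ex_derive (peval c n) x).
    { clear. induction n; intros x.
      - unfold peval; simpl. auto_derive; auto.
      - change (peval c (S n)) with (fun x => peval c n x + c (S n) * x^(S n)).
        apply (ex_derive_plus (peval c n) (fun x => c (S n) * x^(S n))). apply IHn. auto_derive; auto. }
    auto_derive. auto. }
  set (M := y Mx * y Mx) in *.
  assert (hxj : forall j, 0 <= q^j*a1 <= a1).
  { intros j. assert (0 < q^j <= 1) by (split; [apply pow_lt; lra| apply pow_le1; lra]). split; nra. }
  assert (ha0 : forall j, 0 <= a j).
  { intros j. unfold a. pose proof (v_bounds _ _ _ _ _ _ _ _ _ St j).
    apply Rmult_le_pos. lra. apply Rle_0_sqr. }
  assert (hex : ex_series a).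
  { apply (ex_series_le a (fun j => (M * / LD q a1 a2) * r^j)).
    - intros j. change norm with Rabs. rewrite Rabs_pos_eq by apply ha0.
      unfold a. pose proof (v_bounds _ _ _ _ _ _ _ _ _ St j) as hv. fold r in hv.
      specialize (hM _ (hxj j)). simpl in hM. fold M in hM.
      assert (0 <= y (q^j*a1) * y (q^j*a1)) by apply Rle_0_sqr.
      apply Rle_trans with ((r^j * / LD q a1 a2) * (y (q^j*a1) * y (q^j*a1))).
      + apply Rmult_le_compat_r; lra.
      + assert (0 <= r^j * / LD q a1 a2).
        { apply Rmult_le_pos. apply pow_le; lra. left; apply Rinv_0_lt_compat; apply exp_pos. }
        nra.
    - apply (ex_series_scal_l (V := R_NormedModule)). exists (/ (1 - r)). apply is_series_geom.
      rewrite Rabs_pos_eq; lra. }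
  exists (Series a). split; [|apply Series_correct; exact hex].
  assert (hnz : exists j, y (q^j*a1) <> 0).
  { apply Classical_Pred_Type.not_all_not_ex. intros hall.
    apply hc. apply (poly_zero q a1 hq ltac:(lra) n c).
    - intros j. specialize (hall j). apply Classical_Prop.NNPP in hall. exact hall.
    - lia. }
  destruct hnz as [j hj].
  assert (hpos : 0 < a j).
  { unfold a. pose proof (v_bounds _ _ _ _ _ _ _ _ _ St j).
    apply Rmult_lt_0_compat. lra. assert (0 < y (q^j*a1) * y (q^j*a1)). { apply Rsqr_pos_lt; auto. } lra. }
  pose proof (Series_correct a hex) as hs.
  assert (hinc : forall N, sum_n a N <= sum_n a (S N)).
  { intros N. rewrite sum_Sn. unfold plus. simpl. specialize (ha0 (S N)). lra. }
  pose proof (is_lim_seq_incr_compare (sum_n a) (Series a) hs hinc j) as hle.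
  rewrite sum_n_Reals in hle.
  assert (a j <= sum_f_R0 a j).
  { destruct j. simpl. lra. simpl. assert (0 <= sum_f_R0 a j) by (apply cond_pos_sum; auto). lra. }
  lra.
Qed.

Lemma peval_exd c n x : ex_derive (peval c n) x.
Proof.
  revert x. induction n; intros x.
  - unfold peval; simpl. auto_derive; auto.
  - change (peval c (S n)) with (fun x => peval c n x + c (S n) * x^(S n)).
    apply (ex_derive_plus (peval c n) (fun x => c (S n) * x^(S n))). apply IHn. auto_derive; auto.
Qed.

Lemma term_conv q s1 s2 a1 a2 alpha (P Q : R -> R) j :
  0 < q < 1 -> 0 < a1 < a2 -> s1 <> 0 ->
  cexp (Cmult alpha (RtoC (ln q))) = RtoC (/ q ^ 2 * s2 * a2 / (s1 * a1)) ->
  Cmult (RtoC ((1 - q) * a1 * q ^ j))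
    ((fun x => Cmult (RtoC (P x * Q x)) (rho q a1 a2 alpha x)) (q ^ j * a1))
  = Cmult (cexp (Cmult alpha (RtoC (ln a1))))
      (RtoC ((1-q)*a1 * (vw q s1 s2 a1 a2 j * (P (q^j*a1) * Q (q^j*a1))))).
Proof.
  intros hq ha hs1 hal. unfold rho.
  rewrite (cabspow_pt q a1 alpha _ j ltac:(lra) ltac:(lra) hal).
  replace (q * (q^j*a1) / a1) with (q^(S j)) by (simpl; field; lra).
  replace (q^j*a1/a2) with (q^j*(a1/a2)) by (field; lra).
  unfold vw, KK.
  destruct (cexp (Cmult alpha (RtoC (ln a1)))) as [u v].
  unfold Cmult, RtoC. simpl. rewrite Rpow_mult_distr. f_equal; ring.
Qed.

Lemma P_diff c n : c (S n) = 0 -> forall q, q <> 1 -> forall X,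
  peval c n X - peval c n (q*X) = (1-q)*X*peval (dc q c) n X.
Proof.
  intros hc q hq X. rewrite (peval_ext_S c n hc). apply peval_diff. auto.
Qed.

Theorem theorem4p10 (q : R) (hq : 0 < q < 1)
  (sigma1 tau : R -> R) (s1 s2 t1 t0 a1 a2 : R)
  (ht : forall x, tau x = t1 * x + t0) (ht1 : t1 <> 0)
  (hs1 : s1 <> 0) (hs2 : s2 <> 0) (ha : 0 < a1 < a2)
  (hsigma1 : forall x, sigma1 x = s1 / 2 * x * (x - a1))
  (hsigma2 : forall x, q * (sigma1 x + (1 - / q) * x * tau x) = s2 / 2 * x * (x - a2))
  (hy0 : let y0 := / q * (1 - (1 - / q) / a1 * (t0 / (s1 / 2))) in 0 < q * y0 < 1)
  (hL : let Lq := / q ^ 2 * (1 + (1 - / q) * t1 / (s1 / 2)) in 0 < q ^ 2 * Lq < 1)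
  (alpha : C)
  (halpha : cexp (Cmult alpha (RtoC (ln q))) = RtoC (/ q ^ 2 * s2 * a2 / (s1 * a1))) :
  exists (c : nat -> nat -> R) (d : nat -> C),
    (forall n, c n n <> 0) /\
    (forall n x, qEHT q sigma1 tau (lambda_n q t1 s1 n) (peval (c n) n) x) /\
    (forall n, d n <> RtoC 0) /\
    (forall m n, is_qint q a1
        (fun x => Cmult (RtoC (peval (c n) n x * peval (c m) m x)) (rho q a1 a2 alpha x))
        (if Nat.eqb m n then d n else RtoC 0)).
Proof.
  assert (hsig2' : forall x, q * (s1 / 2 * x * (x - a1) + (1 - / q) * x * (t1 * x + t0)) = s2 / 2 * x * (x - a2)).
  { intros x. rewrite <- hsigma1, <- ht. apply hsigma2. }
  destruct (coef_rel q s1 s2 t1 t0 a1 a2 hq hsig2') as [hs2e hs2a2].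
  assert (hq0 : q <> 0) by lra.
  assert (hr : 0 < s2/(q*s1) < 1).
  { simpl in hL. replace (s2/(q*s1)) with (q * (q * 1) * (/ (q * (q * 1)) * (1 + (1 - / q) * t1 / (s1 / 2)))).
    exact hL. rewrite hs2e. field. auto. }
  assert (hqK : 0 < s2*a2/(q*s1*a1) < 1).
  { simpl in hy0. replace (s2*a2/(q*s1*a1)) with (q * (/ q * (1 - (1 - / q) / a1 * (t0 / (s1 / 2))))).
    exact hy0. rewrite hs2a2. field. repeat split; auto; lra. }
  assert (St : Setting q sigma1 tau s1 s2 t1 t0 a1 a2) by (constructor; auto).
  set (c := fun n => coef (lambda_n q t1 s1) (mu q s1 t0 a1) n).
  assert (hcS : forall n, c n (S n) = 0) by (intros n; apply coef_big; lia).
  assert (hcn : forall n, c n n = 1) by (intros n; apply coef_nn).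
  set (B := cexp (Cmult alpha (RtoC (ln a1)))).
  assert (hB : B <> RtoC 0) by apply cexp_nz.
  set (Sn := fun n => Series (fun j => vw q s1 s2 a1 a2 j * (peval (c n) n (q^j*a1) * peval (c n) n (q^j*a1)))).
  assert (hSn : forall n, 0 < Sn n /\
     is_series (fun j => vw q s1 s2 a1 a2 j * (peval (c n) n (q^j*a1) * peval (c n) n (q^j*a1))) (Sn n)).
  { intros n. destruct (norm_pos q sigma1 tau s1 s2 t1 t0 a1 a2 (c n) n St) as [S [hS1 hS2]].
    rewrite hcn; lra.
    unfold Sn. rewrite (is_series_unique _ _ hS2). auto. }
  exists c, (fun n => Cmult B (RtoC ((1-q)*a1*Sn n))).
  split; [intros n; rewrite hcn; lra|].
  split; [intros n x; apply (qEHT_P q hq sigma1 tau s1 s2 t1 t0 a1 ht hs1 hsigma1 hs2e hr)|].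
  split.
  { intros n. apply Cmult_neq_0; auto. intro E. apply RtoC_inj in E.
    destruct (hSn n) as [h _]. assert (0 < (1-q)*a1) by nra. nra. }
  intros m n. unfold is_qint.
  eapply is_series_ext.
  { intros j. symmetry. apply (term_conv q s1 s2 a1 a2 alpha (peval (c n) n) (peval (c m) m) j hq ha hs1 halpha). }
  fold B.
  destruct (Nat.eqb_spec m n) as [e|ne].
  - subst m. apply is_series_CR.
    pose proof (proj2 (hSn n)) as h.
    apply (is_series_scal_l ((1-q)*a1)) in h. exact h.
  - assert (hl : lambda_n q t1 s1 n <> lambda_n q t1 s1 m).
    { destruct (Nat.lt_total m n) as [h|[h|h]].
      - apply (lam_distinct q s1 s2 t1 m n); auto.
      - contradiction.
      - intro E. symmetry in E. revert E. apply (lam_distinct q s1 s2 t1 n m); auto. }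
    assert (ho := orth q sigma1 tau s1 s2 t1 t0 a1 a2 (peval (c n) n) (peval (c m) m)
      (peval (dc q (c n)) n) (peval (dc q (c m)) m) (lambda_n q t1 s1 n) (lambda_n q t1 s1 m) St
      (fun x => qEHT_P q hq sigma1 tau s1 s2 t1 t0 a1 ht hs1 hsigma1 hs2e hr n x)
      (fun x => qEHT_P q hq sigma1 tau s1 s2 t1 t0 a1 ht hs1 hsigma1 hs2e hr m x)
      (P_diff (c n) n (hcS n) q ltac:(lra)) (P_diff (c m) m (hcS m) q ltac:(lra))
      (peval_exd _ _) (peval_exd _ _) (peval_exd _ _) (peval_exd _ _) hl).
    apply (is_series_scal_l ((1-q)*a1)) in ho.
    replace (RtoC 0) with (Cmult B (RtoC ((1-q)*a1*0))).
    + apply is_series_CR. exact ho.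
    + destruct B as [u v]. unfold Cmult, RtoC. simpl. f_equal; ring.
Qed.
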